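(* For any integers $m,n\geqslant 1$ and $N\geqslant 1$, the endomorphism $\mathscr{A}_{m,n}=\sum_{1\leqslant a\leqslant m,\,1\leqslant b'\leqslant n}\tau_{ab'}$ of $V^{m,n}$ satisfies: (1) $\mathscr{A}_{m,n}$ is diagonalisable; (2) $\ker\mathscr{A}_{m,n}=V^{m,n}_0$ and $\operatorname{Im}\mathscr{A}_{m,n}=V^{m,n}_1$, so that $V^{m,n}=V^{m,n}_0\oplus V^{m,n}_1$; (3) all eigenvalues of $\mathscr{A}_{m,n}$ are real and non-negative.
   Context: $V$ is a complex vector space of dimension $N$ with basis $\{e_i\}$ and dual basis $\{e^i\}$ of $V^*$; $V^{m,n}=V^{\otimes m}\otimes V^{*\otimes n}$. For $1\leqslant a\leqslant m$, $1\leqslant b'\leqslant n$, $\mathrm{tr}_{ab'}:V^{m,n}\to V^{m-1,n-1}$ contracts the $a$-th factor $V$ with the $b'$-th factor $V^*$ (i.e. multiplies by $\langle\varphi_{b'},v_a\rangle$ and deletes both factors), and $\mathrm{tr}^+_{ab'}:V^{m-1,n-1}\to V^{m,n}$ inserts $\sum_{i=1}^N e_i\otimes e^i$ with $e_i$ in the $a$-th $V$-position and $e^i$ in the $b'$-th $V^*$-position. $\tau_{ab'}=\mathrm{tr}^+_{ab'}\circ\mathrm{tr}_{ab'}$. The traceless subspace is $V^{m,n}_0=\bigcap_{a,b'}\ker\mathrm{tr}_{ab'}$, and $V^{m,n}_1$ is the span of the images of all $\mathrm{tr}^+_{ab'}$. *)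

(* Defs.v *)
From mathcomp Require Import all_boot all_algebra.
Set Implicit Arguments. Unset Strict Implicit. Unset Printing Implicit Defensive.
Import GRing.Theory Num.Theory.
Local Open Scope ring_scope.

(* V = C^N with standard basis e_1..e_N and dual basis e^1..e^N.
   A tensor T in V^{m,n} = V^{(x)m} (x) V*^{(x)n} is identified with its
   coordinate family: T = sum_{(i,j)} T(i,j) e_{i_1}(x)..(x)e_{i_m}(x)e^{j_1}(x)..(x)e^{j_n},
   where i : 'I_m -> 'I_N (upper indices) and j : 'I_n -> 'I_N (lower indices). *)
Definition Idx (N m n : nat) : finType :=
  ({ffun 'I_m -> 'I_N} * {ffun 'I_n -> 'I_N})%type.

Definition tensor (C : numClosedFieldType) (N m n : nat) : vectType C :=
  {ffun Idx N m n -> C^o}.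

Definition ins (N m : nat) (a : 'I_m.+1) (k : 'I_N) (i : {ffun 'I_m -> 'I_N})
  : {ffun 'I_m.+1 -> 'I_N} :=
  [ffun x => if unlift a x is Some y then i y else k].

Definition del (N m : nat) (a : 'I_m.+1) (i : {ffun 'I_m.+1 -> 'I_N})
  : {ffun 'I_m -> 'I_N} :=
  [ffun y => i (lift a y)].

Definition tr (C : numClosedFieldType) (N m n : nat) (a : 'I_m.+1) (b : 'I_n.+1)
  (T : tensor C N m.+1 n.+1) : tensor C N m n :=
  [ffun ij : Idx N m n => \sum_(k < N) T (ins a k ij.1, ins b k ij.2)].

(* tr^+_{ab'} : V^{m,n} -> V^{m+1,n+1}, insertion of sum_k e_k (x) e^k
   at the a-th V-position and the b-th V*-position *)
Definition trp (C : numClosedFieldType) (N m n : nat) (a : 'I_m.+1) (b : 'I_n.+1)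
  (S : tensor C N m n) : tensor C N m.+1 n.+1 :=
  [ffun ij : Idx N m.+1 n.+1 =>
     if ij.1 a == ij.2 b then S (del a ij.1, del b ij.2) else 0].

Definition tau (C : numClosedFieldType) (N m n : nat) (a : 'I_m.+1) (b : 'I_n.+1)
  : 'End(tensor C N m.+1 n.+1) :=
  linfun (trp a b \o tr a b).

Definition Amn (C : numClosedFieldType) (N m n : nat) : 'End(tensor C N m.+1 n.+1) :=
  \sum_(a < m.+1) \sum_(b < n.+1) tau C N a b.

Definition V0 (C : numClosedFieldType) (N m n : nat) : {vspace tensor C N m.+1 n.+1} :=
  (\bigcap_(a < m.+1) \bigcap_(b < n.+1) lker (linfun (@tr C N m n a b)))%VS.

Definition V1 (C : numClosedFieldType) (N m n : nat) : {vspace tensor C N m.+1 n.+1} :=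
  (\sum_(a < m.+1) \sum_(b < n.+1) limg (linfun (@trp C N m n a b)))%VS.

Definition diagonalisable (K : fieldType) (vT : vectType K) (f : 'End(vT)) : Prop :=
  exists B : seq vT, basis_of fullv B /\
    forall v, v \in B -> exists lam : K, f v = lam *: v.

(* Main.v *)
From HB Require Import structures.
Require Import Defs.
From mathcomp Require Import all_boot all_order all_algebra zify.
Set Implicit Arguments. Unset Strict Implicit. Unset Printing Implicit Defensive.
Import Order.TTheory GRing.Theory Num.Theory.
Local Open Scope ring_scope.

Section S.
Variable C : numClosedFieldType.
Variables N m n : nat.

Lemma del_ins M (a : 'I_M.+1) k (i : {ffun 'I_M -> 'I_N}) : del a (ins a k i) = i.
Proof. by apply/ffunP=> y; rewrite !ffunE liftK. Qed.

Lemma ins_at M (a : 'I_M.+1) k (i : {ffun 'I_M -> 'I_N}) : ins a k i a = k.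
Proof. by rewrite ffunE unlift_none. Qed.

Lemma ins_del M (a : 'I_M.+1) (I : {ffun 'I_M.+1 -> 'I_N}) : ins a (I a) (del a I) = I.
Proof. by apply/ffunP=> x; rewrite !ffunE; case: unliftP => [y ->|->] //; rewrite ffunE. Qed.

Definition dot (M1 M2 : nat) (x y : tensor C N M1 M2) : C :=
  \sum_u x u * (y u)^*.

Lemma dotC M1 M2 (x y : tensor C N M1 M2) : dot x y = (dot y x)^*.
Proof. by rewrite /dot rmorph_sum; apply: eq_bigr => u _; rewrite rmorphM /= conjCK mulrC. Qed.

Lemma tr_adj (a : 'I_m.+1) (b : 'I_n.+1) (T : tensor C N m.+1 n.+1) (S : tensor C N m n) :
  dot (tr a b T) S = dot T (trp a b S).
Proof.
rewrite /dot.
transitivity (\sum_(p : Idx N m n * 'I_N) T (ins a p.2 p.1.1, ins b p.2 p.1.2) * (S p.1)^*).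
  rewrite -(pair_bigA _ (fun w k => T (ins a k w.1, ins b k w.2) * (S w)^*)) /=; apply: eq_bigr => w _; rewrite ffunE mulr_suml; apply: eq_bigr => k _ //.
rewrite (bigID (fun u : Idx N m.+1 n.+1 => u.1 a == u.2 b)) /= [X in _ + X]big1 ?addr0; last first.
  by move=> u /negPf h; rewrite ffunE h conjC0 mulr0.
rewrite (reindex_onto (fun p : Idx N m n * 'I_N => (ins a p.2 p.1.1, ins b p.2 p.1.2))
   (fun u : Idx N m.+1 n.+1 => ((del a u.1, del b u.2), u.1 a))) /=; last first.
  by case=> I J /= /eqP h; rewrite ins_del h ins_del.
apply: eq_big => [[[i j] k]|[[i j] k] _] /=.
  by rewrite !del_ins ins_at !ins_at !eqxx.
by rewrite ffunE !ins_at eqxx !del_ins.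
Qed.

Lemma tr_lin (a : 'I_m.+1) (b : 'I_n.+1) : linear (@tr C N m n a b).
Proof.
move=> k x y; apply/ffunP=> ij; rewrite !ffunE /= scaler_sumr -big_split /=.
by apply: eq_bigr => u _; rewrite !ffunE.
Qed.
HB.instance Definition _ a b := GRing.isSemilinear.Build C _ _ _ (@tr C N m n a b)
  (GRing.semilinear_linear (tr_lin a b)).

Lemma trp_lin (a : 'I_m.+1) (b : 'I_n.+1) : linear (@trp C N m n a b).
Proof.
move=> k x y; apply/ffunP=> ij; rewrite !ffunE /=.
by case: ifP => _; rewrite ?ffunE // scaler0 addr0.
Qed.
HB.instance Definition _ a b := GRing.isSemilinear.Build C _ _ _ (@trp C N m n a b)
  (GRing.semilinear_linear (trp_lin a b)).

Lemma AmnE (T : tensor C N m.+1 n.+1) :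
  Amn C N m n T = \sum_(a < m.+1) \sum_(b < n.+1) trp a b (tr a b T).
Proof.
rewrite /Amn sum_lfunE; apply: eq_bigr => a _; rewrite sum_lfunE.
by apply: eq_bigr => b _; rewrite /tau lfunE.
Qed.

Lemma dot_suml M1 M2 I (r : seq I) (P : pred I) (F : I -> tensor C N M1 M2) y :
  dot (\sum_(i <- r | P i) F i) y = \sum_(i <- r | P i) dot (F i) y.
Proof.
rewrite /dot exchange_big /=; apply: eq_bigr => u _.
by rewrite sum_ffunE mulr_suml.
Qed.

Lemma dotZl M1 M2 (k : C) (x y : tensor C N M1 M2) : dot (k *: x) y = k * dot x y.
Proof. by rewrite /dot mulr_sumr; apply: eq_bigr => u _; rewrite ffunE mulrA. Qed.

Lemma dot0r M1 M2 (x : tensor C N M1 M2) : dot x 0 = 0.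
Proof. by rewrite /dot big1 // => u _; rewrite ffunE conjC0 mulr0. Qed.

Lemma dot_ge0 M1 M2 (x : tensor C N M1 M2) : 0 <= dot x x.
Proof. by rewrite /dot sumr_ge0 // => u _; rewrite -normCK exprn_ge0. Qed.

Lemma dot_eq0 M1 M2 (x : tensor C N M1 M2) : dot x x = 0 -> x = 0.
Proof.
move=> /eqP; rewrite /dot psumr_eq0 => [/allP h|u _]; last by rewrite -normCK exprn_ge0.
apply/ffunP=> u; have := h u (mem_index_enum u); rewrite -normCK ffunE.
by rewrite expf_eq0 /= normr_eq0 => /eqP.
Qed.

Lemma dotA (T : tensor C N m.+1 n.+1) :
  dot (Amn C N m n T) T = \sum_(a < m.+1) \sum_(b < n.+1) dot (tr a b T) (tr a b T).
Proof.
rewrite AmnE dot_suml; apply: eq_bigr => a _; rewrite dot_suml; apply: eq_bigr => b _.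
by rewrite dotC -tr_adj -dotC.
Qed.

Lemma dot0l M1 M2 (x : tensor C N M1 M2) : dot 0 x = 0.
Proof. by rewrite dotC dot0r conjC0. Qed.

Lemma inV0P (v : tensor C N m.+1 n.+1) :
  reflect (forall a b, tr a b v = 0) (v \in V0 C N m n).
Proof.
rewrite /V0 memvE; apply: (iffP subv_bigcapP) => [h a b|h a _].
  have /subv_bigcapP/(_ b isT) := h a isT.
  by rewrite -memvE memv_ker lfunE => /eqP.
by apply/subv_bigcapP => b _; rewrite -memvE memv_ker lfunE /= h.
Qed.

Lemma ker_eq : lker (Amn C N m n) = V0 C N m n.
Proof.
apply/vspaceP => v; rewrite memv_ker; apply/eqP/inV0P => [Av a b|h].
  have := dotA v; rewrite Av dot0l => /esym/psumr_eq0P h.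
  have := h (fun i _ => sumr_ge0 _ (fun j _ => dot_ge0 _)) a isT.
  move/psumr_eq0P => /(_ (fun j _ => dot_ge0 _) b isT).
  exact: dot_eq0.
by rewrite AmnE big1 // => a _; rewrite big1 // => b _; rewrite h linear0.
Qed.

Lemma img_sub : (limg (Amn C N m n) <= V1 C N m n)%VS.
Proof.
apply/subvP => _ /memv_imgP [v _ ->]; rewrite AmnE.
apply: memv_sumr => a _; apply: memv_sumr => b _.
by rewrite -(lfunE (trp a b)); apply: memv_img; apply: memvf.
Qed.

Lemma V1_orth (x y : tensor C N m.+1 n.+1) :
  x \in V0 C N m n -> y \in V1 C N m n -> dot y x = 0.
Proof.
move=> /inV0P hx /memv_sumP [ys hys ->]; rewrite dot_suml big1 // => a _.
have /memv_sumP [zs hzs ->] := hys a isT; rewrite dot_suml big1 // => b _.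
have /memv_imgP [s _ ->] := hzs b isT.
by rewrite lfunE /= dotC -tr_adj hx dot0l conjC0.
Qed.

Lemma cap0 : (V0 C N m n :&: V1 C N m n = 0)%VS.
Proof.
apply/eqP; rewrite -subv0; apply/subvP => x /memv_capP [h0 h1].
by rewrite memv0; apply/eqP/dot_eq0/(V1_orth h0 h1).
Qed.

Lemma img_eq : limg (Amn C N m n) = V1 C N m n.
Proof.
apply/eqP; rewrite eqEdim img_sub /=.
have h1 := limg_ker_dim (Amn C N m n) fullv.
have h2 := dimv_disjoint_sum cap0.
have h3 : (\dim (V0 C N m n + V1 C N m n) <= \dim (fullv : {vspace tensor C N m.+1 n.+1}))%N
  by apply: dimvS; apply: subvf.
move: h1; rewrite capfv ker_eq => h1.
lia.
Qed.

Lemma sum_full : (V0 C N m n + V1 C N m n = fullv)%VS.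
Proof.
apply/eqP; rewrite eqEdim subvf /= dimv_disjoint_sum ?cap0 //.
have h1 := limg_ker_dim (Amn C N m n) fullv.
by move: h1; rewrite capfv ker_eq -img_eq => ->.
Qed.

Lemma eig_nonneg (lam : C) : passmx.leigenvalue (Amn C N m n) lam ->
  lam \is Num.real /\ 0 <= lam.
Proof.
rewrite /passmx.leigenvalue /passmx.leigenspace -vpick0.
set v := vpick _ => vn0.
have : v \in lker (Amn C N m n - lam *: \1%VF) by apply: memv_pick.
rewrite memv_ker !lfunE /= !lfunE /= subr_eq0 => /eqP Av.
have hv : 0 < dot v v by rewrite lt_def dot_ge0 andbT; apply/eqP => /dot_eq0/eqP; rewrite (negPf vn0).
have hA : 0 <= dot (Amn C N m n v) v.
  by rewrite dotA; apply: sumr_ge0 => a _; apply: sumr_ge0 => b _; apply: dot_ge0.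
rewrite Av lfunE /= id_lfunE dotZl in hA.
have l0 : 0 <= lam by rewrite -(pmulr_lge0 _ hv).
by split => //; apply: ger0_real.
Qed.

Lemma dimT : #|Idx N m.+1 n.+1| = \dim (fullv : {vspace tensor C N m.+1 n.+1}).
Proof. by rewrite dimvf /dim /= muln1. Qed.

Local Notation TT := (tensor C N m.+1 n.+1).
Local Notation D := (\dim (fullv : {vspace TT})).

Definition xk (k : 'I_D) : Idx N m.+1 n.+1 := enum_val (cast_ord (esym dimT) k).
Definition delt (x : Idx N m.+1 n.+1) : TT := [ffun u => (u == x)%:R].
Definition ebas : D.-tuple TT := [tuple delt (xk k) | k < D].

Lemma ebasE (k : 'I_D) : ebas`_k = delt (xk k).
Proof. by rewrite -tnth_nth tnth_mktuple. Qed.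

Lemma xk_inj : injective xk.
Proof. by move=> i j /enum_val_inj /cast_ord_inj. Qed.

Lemma decomp (v : TT) : v = \sum_(k < D) v (xk k) *: ebas`_k.
Proof.
apply/ffunP => u; rewrite sum_ffunE.
pose k0 := cast_ord dimT (enum_rank u).
have hk0 : xk k0 = u by rewrite /xk /k0 cast_ordK enum_rankK.
rewrite (bigD1 k0) // big1 ?addr0.
  rewrite ffunE ebasE !ffunE hk0 eqxx; apply/esym; rewrite -[RHS](mulr1 (v u)) -[RHS](addr0 (v u * 1)); reflexivity.
move=> k hk; rewrite ffunE ebasE !ffunE.
case: eqP => [e|]; last by move=> _; exact: (mulr0 (v (xk k))).
by exfalso; move: hk; rewrite -hk0 in e; rewrite (xk_inj (esym e)) eqxx.
Qed.

Lemma ebas_basis : basis_of fullv ebas.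
Proof.
rewrite basisEdim size_tuple leqnn andbT; apply/subvP => v _.
rewrite [v]decomp; apply: rpred_sum => k _; apply: rpredZ.
by apply: memv_span; apply: mem_nth; rewrite size_tuple.
Qed.

Lemma coordE (v : TT) k : coord ebas k v = v (xk k).
Proof. by rewrite {1}[v]decomp coord_sum_free // (basis_free ebas_basis). Qed.

Lemma dot_delt (v : TT) x : dot v (delt x) = v x.
Proof.
rewrite /dot (bigD1 x) //= big1 ?addr0; first by rewrite ffunE eqxx conjC1 mulr1.
by move=> u /negPf h; rewrite ffunE h conjC0 mulr0.
Qed.

Lemma dotA2 (x y : TT) :
  dot (Amn C N m n x) y = \sum_(a < m.+1) \sum_(b < n.+1) dot (tr a b x) (tr a b y).
Proof.
rewrite AmnE dot_suml; apply: eq_bigr => a _; rewrite dot_suml; apply: eq_bigr => b _.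
by rewrite dotC -tr_adj -dotC.
Qed.

Lemma A_selfadj (x y : TT) : dot (Amn C N m n x) y = (dot (Amn C N m n y) x)^*.
Proof.
rewrite !dotA2 rmorph_sum; apply: eq_bigr => a _; rewrite rmorph_sum.
by apply: eq_bigr => b _; rewrite dotC.
Qed.

Definition Mx := passmx.mxof ebas ebas (Amn C N m n).

Lemma MxE i j : Mx i j = (Amn C N m n ebas`_i) (xk j).
Proof.
by rewrite /Mx /passmx.mxof !mxE /= passmx.vecof_delta coordE.
Qed.

Lemma Mx_herm : map_mx Num.Def.conjC (Mx ^T) = Mx.
Proof.
apply/matrixP => i j; rewrite !mxE !passmx.vecof_delta !coordE.
by rewrite -[RHS]dot_delt -ebasE A_selfadj (ebasE i) dot_delt.
Qed.

Lemma Mx_normal : Mx \is normalmx.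
Proof. by apply/normalmxP; rewrite Mx_herm. Qed.

Lemma diagA : diagonalisable (Amn C N m n).
Proof.
set P := spectralmx Mx; set d := spectral_diag Mx.
have /orthomx_spectralP hM := Mx_normal.
have PU : P \in unitmx := spectral_unit Mx.
have v0 : passmx.vecof ebas 0 = 0.
  rewrite /passmx.vecof big1 // => i _; rewrite mxE; exact: scale0r.
have vD : forall x y, passmx.vecof ebas (x + y) = passmx.vecof ebas x + passmx.vecof ebas y.
  by move=> x y; have := @passmx.vecof_linear _ _ ebas 1 x y; rewrite !scale1r.
have vZ : forall k x, passmx.vecof ebas (k *: x) = k *: passmx.vecof ebas x.
  by move=> k x; have := @passmx.vecof_linear _ _ ebas k x 0; rewrite v0 !addr0.
have PM : P *m Mx = diag_mx d *m P by rewrite {1}hM !mulmxA mulmxV // mul1mx.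
exists [seq passmx.vecof ebas (row i P) | i <- enum 'I_D]; split.
  rewrite basisEdim size_map size_enum_ord leqnn andbT; apply/subvP => v _.
  rewrite -(passmx.rVofK ebas_basis v).
  set r := passmx.rVof ebas v.
  have -> : r = (r *m invmx P) *m P by rewrite -mulmxA mulVmx // mulmx1.
  rewrite mulmx_sum_row.
  apply: (big_ind (fun w => passmx.vecof ebas w \in _)).
  - by rewrite v0 rpred0.
  - by move=> x y hx hy; rewrite vD rpredD.
  move=> i _; rewrite vZ; apply: rpredZ.
  by apply: memv_span; apply: map_f; rewrite mem_enum.
move=> _ /mapP [i _ ->]; exists (d 0 i).
have hr : row i P *m Mx = d 0 i *: row i P.
  by rewrite -row_mul PM row_mul row_diag_mx -scalemxAl -rowE.
by rewrite (passmx.hom_vecof ebas ebas_basis) -/Mx hr vZ.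
Qed.
End S.

Theorem lemma2p1 (C : numClosedFieldType) (N m n : nat) (hN : (0 < N)%N) :
  [/\ diagonalisable (Amn C N m n),
      lker (Amn C N m n) = V0 C N m n,
      limg (Amn C N m n) = V1 C N m n,
      (V0 C N m n + V1 C N m n = fullv)%VS /\ (V0 C N m n :&: V1 C N m n = 0)%VS
    & forall lam : C, passmx.leigenvalue (Amn C N m n) lam ->
        lam \is Num.real /\ 0 <= lam].
Proof.
split; [exact: diagA | exact: ker_eq | exact: img_eq | split; [exact: sum_full | exact: cap0] | exact: eig_nonneg].
Qed.
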